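(* The initial algebra of the endofunctor $F=M\otimes-$ on $\mathbf{Met_3}^{L}$ is the initial $F$-algebra $(G,g)$ of $\mathbf{Set_3}$ with $G$ endowed with the discrete metric.
   Context: A tripointed set is a set with three distinct distinguished points $T,L,R$; $\mathbf{Set_3}$ is the category of tripointed sets with maps preserving $T,L,R$. A tripointed metric space is a tripointed set with a metric bounded by $1$ in which $T,L,R$ have pairwise distance $1$; $\mathbf{Met_3}^{L}$ has these as objects and Lipschitz maps preserving $T,L,R$ as morphisms. Let $M=\{a,b,c\}$. $F=M\otimes-$: $M\otimes X$ is the quotient of $M\times X$ by the equivalence relation generated by $(b,T)\sim(a,L)$, $(a,R)\sim(c,T)$, $(c,L)\sim(b,R)$, elements written $m\otimes x$, distinguished points $a\otimes T$, $b\otimes L$, $c\otimes R$, and $(M\otimes f)(m\otimes x)=m\otimes f(x)$; in the metric setting $M\times X$ has metric $\tfrac12 d(x,y)$ within a copy and $1$ between different copies, and $M\otimes X$ has the quotient metric. An $F$-algebra is a pair $(A,\alpha\colon FA\to A)$, with algebra morphisms $h$ satisfying $h\circ\alpha=\beta\circ Fh$. Concretely, $G$ consists of expressions $m_0\otimes\cdots\otimes m_{n-1}\otimes z$ ($n\ge0$, $m_i\in M$, $z\in\{T,L,R\}$) modulo the identifications induced by the relations above and by $T=a\otimes T$, $L=b\otimes L$, $R=c\otimes R$ (the colimit in $\mathbf{Set_3}$ of $I\to FI\to F^2I\to\cdots$ with $I=\{T,L,R\}$), and $g(m\otimes w)=m\otimes w$. The discrete metric is $d(x,y)=1$ for $x\ne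 y$. *)

(* Defs.v *)
From Stdlib Require Import Reals List Relations ClassicalEpsilon.
From Coquelicot Require Import Coquelicot.
Open Scope R_scope.

Definition quot {A : Type} (Rl : A -> A -> Prop) : Type :=
  {P : A -> Prop | exists a, P = Rl a}.
Definition qclass {A : Type} (Rl : A -> A -> Prop) (a : A) : quot Rl :=
  exist (fun P => exists a', P = Rl a') (Rl a) (ex_intro _ a eq_refl).
Definition qrep {A : Type} {Rl : A -> A -> Prop} (P : quot Rl) : A :=
  proj1_sig (constructive_indefinite_description _ (proj2_sig P)).
Definition qin {A : Type} {Rl : A -> A -> Prop} (P : quot Rl) (a : A) : Prop :=
  proj1_sig P a.

Record Met3pre := { mcar :> Type; mdist : mcar -> mcar -> R;
                    mT : mcar; mL : mcar; mR : mcar }.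

Definition is_met3 (X : Met3pre) : Prop :=
  (forall x y : X, 0 <= mdist X x y) /\
  (forall x y : X, mdist X x y = 0 <-> x = y) /\
  (forall x y : X, mdist X x y = mdist X y x) /\
  (forall x y z : X, mdist X x z <= mdist X x y + mdist X y z) /\
  (forall x y : X, mdist X x y <= 1) /\
  mdist X (mT X) (mL X) = 1 /\ mdist X (mT X) (mR X) = 1 /\
  mdist X (mL X) (mR X) = 1.

Definition lipschitz (X Y : Met3pre) (f : X -> Y) : Prop :=
  exists K : R, 0 <= K /\ forall x y : X, mdist Y (f x) (f y) <= K * mdist X x y.
Definition preserves3 (X Y : Met3pre) (f : X -> Y) : Prop :=
  f (mT X) = mT Y /\ f (mL X) = mL Y /\ f (mR X) = mR Y.
Definition hom (X Y : Met3pre) (f : X -> Y) : Prop :=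
  preserves3 X Y f /\ lipschitz X Y f.

Inductive M := ma | mb | mc.
Definition M_eq_dec (m n : M) : {m = n} + {m <> n}.
Proof. decide equality. Defined.

Inductive tens_gen (X : Met3pre) : M * X -> M * X -> Prop :=
| tg1 : tens_gen X (mb, mT X) (ma, mL X)
| tg2 : tens_gen X (ma, mR X) (mc, mT X)
| tg3 : tens_gen X (mc, mL X) (mb, mR X).
Definition tens_eq (X : Met3pre) : M * X -> M * X -> Prop :=
  clos_refl_sym_trans _ (tens_gen X).

Definition Tens (X : Met3pre) : Type := quot (tens_eq X).
Definition tens (X : Met3pre) (m : M) (x : X) : Tens X := qclass (tens_eq X) (m, x).

Definition dMX (X : Met3pre) (p q : M * X) : R :=
  if M_eq_dec (fst p) (fst q) then / 2 * mdist X (snd p) (snd q) else 1.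

(* chains [(p1,q1);...;(pn,qn)], n >= 1, p1 in P, qn in Q, q_i ~ p_(i+1) *)
Fixpoint chain_link (X : Met3pre) (q : M * X) (c : list ((M * X) * (M * X)))
  (Q : Tens X) : Prop :=
  match c with
  | nil => qin Q q
  | (p', q') :: c' => tens_eq X q p' /\ chain_link X q' c' Q
  end.
Definition chain (X : Met3pre) (P Q : Tens X) (c : list ((M * X) * (M * X))) : Prop :=
  match c with
  | nil => False
  | (p, q) :: c' => qin P p /\ chain_link X q c' Q
  end.
Fixpoint chain_cost (X : Met3pre) (c : list ((M * X) * (M * X))) : R :=
  match c with
  | nil => 0
  | (p, q) :: c' => dMX X p q + chain_cost X c'
  end.
Definition qdist (X : Met3pre) (P Q : Tens X) : R :=
  real (Glb_Rbar (fun s => exists c, chain X P Q c /\ s = chain_cost X c)).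

Definition FM (X : Met3pre) : Met3pre :=
  {| mcar := Tens X; mdist := qdist X;
     mT := tens X ma (mT X); mL := tens X mb (mL X); mR := tens X mc (mR X) |}.

(** F-algebras in Met_3^L and their morphisms; (M (x) h)(m (x) x) = m (x) h x *)
Definition is_alg (A : Met3pre) (alpha : FM A -> A) : Prop := hom (FM A) A alpha.
Definition alg_morph (A B : Met3pre) (alpha : FM A -> A) (beta : FM B -> B)
  (h : A -> B) : Prop :=
  hom A B h /\ forall (m : M) (x : A), h (alpha (tens A m x)) = beta (tens B m (h x)).

Inductive Pt := pT | pL | pR.
(* expression m0 (x) ... (x) m_(n-1) (x) z  is  (m0 :: ... :: m_(n-1) :: nil, z) *)
Inductive G_gen : list M * Pt -> list M * Pt -> Prop :=
| gg1 w : G_gen (w ++ mb :: nil, pT) (w ++ ma :: nil, pL)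
| gg2 w : G_gen (w ++ ma :: nil, pR) (w ++ mc :: nil, pT)
| gg3 w : G_gen (w ++ mc :: nil, pL) (w ++ mb :: nil, pR)
| ggT w : G_gen (w, pT) (w ++ ma :: nil, pT)
| ggL w : G_gen (w, pL) (w ++ mb :: nil, pL)
| ggR w : G_gen (w, pR) (w ++ mc :: nil, pR).
Definition G_eq := clos_refl_sym_trans _ G_gen.
Definition Gcar : Type := quot G_eq.
Definition Gpt (z : Pt) : Gcar := qclass G_eq (nil, z).

Definition dG (x y : Gcar) : R :=
  if excluded_middle_informative (x = y) then 0 else 1.

Definition Gd : Met3pre :=
  {| mcar := Gcar; mdist := dG; mT := Gpt pT; mL := Gpt pL; mR := Gpt pR |}.

(* g(m (x) [w,z]) = [m w, z], defined via representatives *)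
Definition g (u : FM Gd) : Gd :=
  let mx := qrep u in
  let wz := qrep (snd mx : Gcar) in
  qclass G_eq (fst mx :: fst wz, snd wz).

(* Main.v *)
Require Import Defs.
From Stdlib Require Import Reals.
From Stdlib Require Import Lra List Relations FunctionalExtensionality PropExtensionality ProofIrrelevance ClassicalEpsilon.
From Coquelicot Require Import Coquelicot.
Open Scope R_scope.

Section Q.
Context {A : Type} (Rl : A -> A -> Prop) (HE : equivalence A Rl).

Lemma quot_ext (P Q : quot Rl) : proj1_sig P = proj1_sig Q -> P = Q.
Proof. destruct P, Q; simpl; intros; subst; f_equal; apply proof_irrelevance. Qed.

Lemma Rl_fun a b : Rl a b -> Rl a = Rl b.
Proof.
  intros H; apply functional_extensionality; intros x;
  apply propositional_extensionality; split; intros H'.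
  - apply (Relation_Definitions.equiv_trans A Rl HE _ a); auto. apply (Relation_Definitions.equiv_sym A Rl HE); auto.
  - apply (Relation_Definitions.equiv_trans A Rl HE _ b); auto.
Qed.

Lemma qclass_eq a b : Rl a b -> qclass Rl a = qclass Rl b.
Proof. intros H; apply quot_ext; simpl; apply Rl_fun; auto. Qed.

Lemma qrep_spec (P : quot Rl) : proj1_sig P = Rl (qrep P).
Proof. unfold qrep. destruct (constructive_indefinite_description _ _); simpl; auto. Qed.

Lemma qclass_qrep (P : quot Rl) : qclass Rl (qrep P) = P.
Proof. apply quot_ext; simpl; symmetry; apply qrep_spec. Qed.

Lemma qrep_qclass a : Rl a (qrep (qclass Rl a)).
Proof.
  pose proof (qrep_spec (qclass Rl a)) as E; simpl in E.
  rewrite E. apply (Relation_Definitions.equiv_refl A Rl HE).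
Qed.

Lemma qin_resp (Q : quot Rl) x y : qin Q x -> Rl y x -> qin Q y.
Proof.
  destruct Q as [P [a ->]]; unfold qin; simpl; intros H1 H2.
  apply (Relation_Definitions.equiv_trans A Rl HE _ x); auto. apply (Relation_Definitions.equiv_sym A Rl HE); auto.
Qed.

Lemma qin_same (P Q : quot Rl) x : qin P x -> qin Q x -> P = Q.
Proof.
  destruct P as [P [a ->]], Q as [Q [b ->]]; unfold qin; simpl; intros H1 H2.
  apply quot_ext; simpl. rewrite (Rl_fun _ _ H1), (Rl_fun _ _ H2); auto.
Qed.

Lemma qin_qclass a : qin (qclass Rl a) a.
Proof. unfold qin; simpl; apply (Relation_Definitions.equiv_refl A Rl HE). Qed.
End Q.

Lemma Geq_equiv : equivalence _ G_eq.
Proof. apply clos_rst_is_equiv. Qed.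
Lemma teq_equiv X : equivalence _ (tens_eq X).
Proof. apply clos_rst_is_equiv. Qed.

Section Fold.
Context {X : Type} (f : M -> X -> X) (pt : Pt -> X)
  (e1 : f mb (pt pT) = f ma (pt pL)) (e2 : f ma (pt pR) = f mc (pt pT))
  (e3 : f mc (pt pL) = f mb (pt pR)) (eT : pt pT = f ma (pt pT))
  (eL : pt pL = f mb (pt pL)) (eR : pt pR = f mc (pt pR)).

Definition fev (p : list M * Pt) : X := fold_right f (pt (snd p)) (fst p).

Lemma fev_resp p q : G_eq p q -> fev p = fev q.
Proof.
  intros H; induction H as [p q H| p | p q _ IH | p q r _ IH1 _ IH2]; try congruence.
  destruct H; unfold fev; simpl; rewrite ?fold_right_app; simpl; f_equal; congruence.
Qed.
End Fold.

Definition evf (m : M) (p : R * R) : R * R :=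
  match m with
  | ma => ((fst p + 1) / 2, snd p / 2)
  | mb => (fst p / 2, (snd p + 1) / 2)
  | mc => (fst p / 2, snd p / 2)
  end.
Definition evp (z : Pt) : R * R :=
  match z with pT => (1, 0) | pL => (0, 1) | pR => (0, 0) end.

Lemma ev_resp p q : G_eq p q -> fev evf evp p = fev evf evp q.
Proof.
  apply fev_resp; simpl; f_equal; field.
Qed.

Lemma Gpt_neq z1 z2 : z1 <> z2 -> Gpt z1 <> Gpt z2.
Proof.
  intros Hn E.
  assert (H : G_eq (nil, z1) (nil, z2)).
  { assert (E' := f_equal (@proj1_sig _ _) E). simpl in E'. rewrite E'.
    apply rst_refl. }
  apply ev_resp in H. unfold fev in H; simpl in H.
  destruct z1, z2; try congruence; simpl in H; injection H; lra.
Qed.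

Lemma dG_cases (x y : Gcar) : (x = y /\ dG x y = 0) \/ (x <> y /\ dG x y = 1).
Proof. unfold dG; destruct (excluded_middle_informative (x = y)); auto. Qed.

Lemma Gd_met3 : is_met3 Gd.
Proof.
  unfold is_met3; simpl.
  assert (nTL := Gpt_neq pT pL ltac:(discriminate)).
  assert (nTR := Gpt_neq pT pR ltac:(discriminate)).
  assert (nLR := Gpt_neq pL pR ltac:(discriminate)).
  repeat split.
  - intros x y; destruct (dG_cases x y) as [[_ ->]|[_ ->]]; lra.
  - match goal with |- dG ?a ?b = 0 -> _ =>
      intros H; destruct (dG_cases a b) as [[? _]|[_ E]]; auto; lra end.
  - match goal with |- ?a = ?b -> _ =>
      intros ->; destruct (dG_cases b b) as [[_ ->]|[? _]]; auto; congruence end.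
  - intros x y; destruct (dG_cases x y) as [[? ->]|[? ->]];
    destruct (dG_cases y x) as [[? ->]|[? ->]]; auto; subst; congruence.
  - intros x y z; destruct (dG_cases x z) as [[? ->]|[? ->]];
    destruct (dG_cases x y) as [[? ->]|[? ->]];
    destruct (dG_cases y z) as [[? ->]|[? ->]]; try lra; subst; congruence.
  - intros x y; destruct (dG_cases x y) as [[_ ->]|[_ ->]]; lra.
  - destruct (dG_cases (Gpt pT) (Gpt pL)) as [[? _]|[_ ->]]; tauto.
  - destruct (dG_cases (Gpt pT) (Gpt pR)) as [[? _]|[_ ->]]; tauto.
  - destruct (dG_cases (Gpt pL) (Gpt pR)) as [[? _]|[_ ->]]; tauto.
Qed.

Lemma Geq_cons m p q : G_eq p q -> G_eq (m :: fst p, snd p) (m :: fst q, snd q).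
Proof.
  intros H; induction H as [p q H| p | p q _ IH | p q r _ IH1 _ IH2].
  - apply rst_step. destruct H; simpl;
    [ apply (gg1 (m :: w)) | apply (gg2 (m :: w)) | apply (gg3 (m :: w))
    | apply (ggT (m :: w)) | apply (ggL (m :: w)) | apply (ggR (m :: w)) ].
  - apply rst_refl.
  - apply rst_sym; auto.
  - eapply rst_trans; eauto.
Qed.

Definition Gfun (p : M * Gcar) : Gcar :=
  qclass G_eq (fst p :: fst (qrep (snd p)), snd (qrep (snd p))).

Lemma Gfun_qclass m w z : Gfun (m, qclass G_eq (w, z)) = qclass G_eq (m :: w, z).
Proof.
  unfold Gfun; simpl. apply qclass_eq; [apply Geq_equiv|].
  apply rst_sym. apply (Geq_cons m (w, z)). apply qrep_qclass, Geq_equiv.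
Qed.

Lemma Gfun_resp p q : tens_eq Gd p q -> Gfun p = Gfun q.
Proof.
  intros H; induction H as [p q H| p | p q _ IH | p q r _ IH1 _ IH2]; try congruence.
  destruct H; simpl; unfold Gpt; rewrite !Gfun_qclass; apply qclass_eq;
    try apply Geq_equiv.
  - first [apply rst_step, (gg1 nil) | apply rst_sym, rst_step, (gg1 nil)].
  - first [apply rst_step, (gg2 nil) | apply rst_sym, rst_step, (gg2 nil)].
  - first [apply rst_step, (gg3 nil) | apply rst_sym, rst_step, (gg3 nil)].
Qed.

Lemma g_Gfun m x : g (tens Gd m x) = Gfun (m, x).
Proof.
  change (Gfun (qrep (tens Gd m x)) = Gfun (m, x)).
  symmetry; apply Gfun_resp. exact (qrep_qclass (tens_eq Gd) (teq_equiv Gd) (m, x)).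
Qed.

Lemma g_tens m w z : g (tens Gd m (qclass G_eq (w, z))) = qclass G_eq (m :: w, z).
Proof. rewrite g_Gfun; apply Gfun_qclass. Qed.

Lemma glb_ge (E : R -> Prop) c0 s0 :
  E s0 -> (forall s, E s -> c0 <= s) -> c0 <= real (Glb_Rbar E).
Proof.
  intros Hs Hc. destruct (Glb_Rbar_correct E) as [Hlb Hglb].
  assert (H1 := Hlb s0 Hs).
  assert (H2 : Rbar_le c0 (Glb_Rbar E)) by (apply Hglb; intros s Hs'; simpl; auto).
  destruct (Glb_Rbar E); simpl in *; tauto.
Qed.

Lemma dMX_ge0 (p q : M * Gd) : 0 <= dMX Gd p q.
Proof.
  destruct p as [m1 x1], q as [m2 x2].
  unfold dMX; destruct M_eq_dec; [|lra]. simpl.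
  destruct (dG_cases x1 x2) as [[_ ->]|[_ ->]]; lra.
Qed.

Lemma cost_ge0 c : 0 <= chain_cost Gd c.
Proof.
  induction c as [|[p q] c IH]; simpl; [lra|]. pose proof (dMX_ge0 p q); lra.
Qed.

Lemma dMX_small (p q : M * Gd) : dMX Gd p q < /2 -> p = q.
Proof.
  destruct p as [m1 x1], q as [m2 x2].
  unfold dMX; destruct M_eq_dec as [e|]; [|lra]. simpl in *.
  destruct (dG_cases x1 x2) as [[E _]|[_ ->]]; [|lra].
  subst; auto.
Qed.

Lemma link_small (Q : Tens Gd) c : forall q, chain_link Gd q c Q -> chain_cost Gd c < /2 -> qin Q q.
Proof.
  induction c as [|[p' q'] c IH]; simpl; auto.
  intros q [H1 H2] Hc. pose proof (dMX_ge0 p' q'). pose proof (cost_ge0 c).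
  assert (p' = q') by (apply dMX_small; lra). subst.
  apply (qin_resp _ (teq_equiv Gd) _ q'); auto. apply IH; auto; lra.
Qed.

Lemma qdist_nonempty X (P Q : Tens X) :
  exists s, exists c, chain X P Q c /\ s = chain_cost X c.
Proof.
  destruct P as [P [a ->]], Q as [Q [b ->]].
  exists (chain_cost X ((a, b) :: nil)), ((a, b) :: nil); split; auto.
  simpl; unfold qin; simpl; split; apply (Relation_Definitions.equiv_refl _ _ (teq_equiv X)).
Qed.

Lemma qdist_ge0 (u v : Tens Gd) : 0 <= qdist Gd u v.
Proof.
  unfold qdist. destruct (qdist_nonempty Gd u v) as [s Hs].
  apply (glb_ge _ _ s Hs). intros s' [c [_ ->]]; apply cost_ge0.
Qed.

Lemma qdist_half (u v : Tens Gd) : u <> v -> /2 <= qdist Gd u v.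
Proof.
  intros Hn. unfold qdist. destruct (qdist_nonempty Gd u v) as [s Hs].
  apply (glb_ge _ _ s Hs). intros s' [c [Hc ->]].
  destruct (Rle_or_lt (/2) (chain_cost Gd c)) as [?|Hlt]; auto. exfalso.
  destruct c as [|[p q] c]; simpl in Hc; [tauto|]. destruct Hc as [H1 H2].
  simpl in Hlt. pose proof (dMX_ge0 p q). pose proof (cost_ge0 c).
  assert (p = q) by (apply dMX_small; lra). subst.
  apply Hn, (qin_same _ (teq_equiv Gd) _ _ q); auto.
  apply (link_small _ c); auto; lra.
Qed.

Lemma g_alg : is_alg Gd g.
Proof.
  split.
  - unfold preserves3; simpl; unfold Gpt; rewrite !g_tens; repeat split;
      apply qclass_eq; try apply Geq_equiv.
    + first [apply rst_step, (ggT nil) | apply rst_sym, rst_step, (ggT nil)].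
    + first [apply rst_step, (ggL nil) | apply rst_sym, rst_step, (ggL nil)].
    + first [apply rst_step, (ggR nil) | apply rst_sym, rst_step, (ggR nil)].
  - exists 2; split; [lra|]. intros u v; simpl.
    destruct (classic (u = v)) as [->|Hn].
    + destruct (dG_cases (g v) (g v)) as [[_ ->]|[? _]]; [|congruence].
      pose proof (qdist_ge0 v v); lra.
    + pose proof (qdist_half u v Hn).
      destruct (dG_cases (g u) (g v)) as [[_ ->]|[_ ->]]; lra.
Qed.

Section Init.
Variables (A : Met3pre) (alpha : FM A -> A) (HA : is_met3 A) (Halg : is_alg A alpha).

Definition Af (m : M) (x : A) : A := alpha (tens A m x).
Definition Apt (z : Pt) : A := match z with pT => mT A | pL => mL A | pR => mR A end.
Definition Hf (p : list M * Pt) : A := fev Af Apt p.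

Lemma tens_rel (p q : M * A) : tens_gen A p q -> tens A (fst p) (snd p) = tens A (fst q) (snd q).
Proof.
  intros H; unfold tens; destruct p, q; simpl.
  apply qclass_eq; [apply teq_equiv|]. apply rst_step; auto.
Qed.

Lemma Hf_resp p q : G_eq p q -> Hf p = Hf q.
Proof.
  destruct Halg as [[PT [PL PR]] _].
  apply fev_resp; unfold Af; simpl.
  - f_equal. exact (tens_rel _ _ (tg1 A)).
  - f_equal. exact (tens_rel _ _ (tg2 A)).
  - f_equal. exact (tens_rel _ _ (tg3 A)).
  - symmetry; exact PT.
  - symmetry; exact PL.
  - symmetry; exact PR.
Qed.

Definition hA (x : Gd) : A := Hf (qrep x).

Lemma hA_qclass p : hA (qclass G_eq p) = Hf p.
Proof. unfold hA. symmetry; apply Hf_resp, qrep_qclass, Geq_equiv. Qed.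

Lemma hA_morph : alg_morph Gd A g alpha hA.
Proof.
  destruct HA as [_ [Hd0 _]].
  split; [split|].
  - unfold preserves3; simpl; unfold Gpt; rewrite !hA_qclass; auto.
  - exists 1; split; [lra|]. intros x y; simpl.
    destruct (HA) as [_ [_ [_ [_ [Hle _]]]]].
    destruct (dG_cases x y) as [[-> ->]|[_ ->]].
    + assert (mdist A (hA y) (hA y) = 0) by (apply Hd0; auto). lra.
    + specialize (Hle (hA x) (hA y)); lra.
  - intros m x. pose proof (qclass_qrep G_eq x) as E. destruct (qrep x) as [w z].
    rewrite <- E. rewrite g_tens, !hA_qclass. reflexivity.
Qed.

Lemma hA_unique h : alg_morph Gd A g alpha h -> hA = h.
Proof.
  intros [[[PT [PL PR]] _] Hc].
  assert (K : forall w z, h (qclass G_eq (w, z)) = Hf (w, z)).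
  { induction w as [|m w IH]; intros z.
    - destruct z; simpl; [exact PT | exact PL | exact PR].
    - rewrite <- g_tens, Hc, IH. reflexivity. }
  apply functional_extensionality; intros x.
  pose proof (qclass_qrep G_eq x) as E. unfold hA. destruct (qrep x) as [w z].
  rewrite <- E, K; reflexivity.
Qed.
End Init.

Theorem mainTheorem4 :
  is_met3 Gd /\ is_alg Gd g /\
  (forall (A : Met3pre) (alpha : FM A -> A),
      is_met3 A -> is_alg A alpha ->
      exists! h : Gd -> A, alg_morph Gd A g alpha h).
Proof.
  split; [exact Gd_met3|]. split; [exact g_alg|].
  intros A alpha HA Halg. exists (hA A alpha). split.
  - apply hA_morph; auto.
  - apply hA_unique.
Qed.
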